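(* If $K\colon\mathbb{E}(D)\to\mathbb{E}(D')$ is affine, then $\mathsf{D}K$ is linear, i.e. $\mathsf{D}K(\eta_1+\eta_2)=\mathsf{D}K(\eta_1)+\mathsf{D}K(\eta_2)$ and $\mathsf{D}K(\alpha\eta)=\alpha\,\mathsf{D}K(\eta)$ for all $\eta,\eta_1,\eta_2\in\mathbb{E}(D)$ and $\alpha\in[0,\infty)$.
   Context: $\mathbb{E}(D)$ is the set of functions $D\to[0,\infty]$ with pointwise order and pointwise operations, where $\infty+x=x+\infty=\infty$, $0\cdot\infty=0$, $r\cdot\infty=\infty$ for $r>0$; for $x\ge y$ in $[0,\infty]$, $x-y$ is the least $z\in[0,\infty]$ with $x=y+z$ (so $\infty-\infty=0$, $\infty-z=\infty$ for $z<\infty$). $K$ is affine if $K(\alpha\eta_1+(1-\alpha)\eta_2)=\alpha K(\eta_1)+(1-\alpha)K(\eta_2)$ for all $\eta_1,\eta_2$ and $\alpha\in[0,1]$. The linear part of $K$ is $(\mathsf{D}K)(\eta)=K(\eta)-K(\mathbb{O})$ (pointwise), where $\mathbb{O}$ is the constant zero function. *)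

(* Defs.v *)
From mathcomp Require Import all_boot all_order all_algebra.
From mathcomp Require Import all_classical reals constructive_ereal.
Set Implicit Arguments. Unset Strict Implicit. Unset Printing Implicit Defensive.
Import Order.TTheory GRing.Theory Num.Theory.
Local Open Scope ring_scope.
Local Open Scope ereal_scope.

Section Ext.
Variable R : realType.

Definition nninf := {x : \bar R | 0 <= x}.

Definition nnval (x : nninf) : \bar R := proj1_sig x.

Definition nnadd (x y : nninf) : nninf :=
  exist _ (nnval x + nnval y) (adde_ge0 (proj2_sig x) (proj2_sig y)).

(* scalar multiplication by a real a >= 0 (ereal: 0 * +oo = 0, r * +oo = +oo for r > 0) *)
Definition nnscale (a : R) (ha : (0 <= a)%R) (x : nninf) : nninf :=
  exist _ (a%:E * nnval x) (mule_ge0 (ha : 0 <= a%:E) (proj2_sig x)).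

(* x - y: for x >= y, the least z with x = y + z (oo - oo = 0, oo - z = oo);
   extended to x < y by truncation at 0 (never used when x >= y). *)
Definition nnsub_val (x y : \bar R) : \bar R :=
  if y == +oo then 0 else maxe (x - y) 0.

Lemma nnsub_ge0 (x y : \bar R) : 0 <= nnsub_val x y.
Proof. rewrite /nnsub_val; case: ifP => _ //; by rewrite le_max lexx orbT. Qed.

Definition nnsub (x y : nninf) : nninf :=
  exist _ (nnsub_val (nnval x) (nnval y)) (nnsub_ge0 _ _).

Definition nnzero : nninf := exist _ 0 (lexx 0).

Definition EE (D : Type) := D -> nninf.
Definition Eadd D (f g : EE D) : EE D := fun d => nnadd (f d) (g d).
Definition Escale D (a : R) (ha : (0 <= a)%R) (f : EE D) : EE D :=
  fun d => nnscale ha (f d).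
Definition Esub D (f g : EE D) : EE D := fun d => nnsub (f d) (g d).
Definition Ezero D : EE D := fun _ => nnzero.

Lemma onem_nneg (a : R) : (a <= 1)%R -> (0 <= 1 - a)%R.
Proof. by rewrite subr_ge0. Qed.

Definition affine D D' (K : EE D -> EE D') : Prop :=
  forall (e1 e2 : EE D) (a : R) (ha0 : (0 <= a)%R) (ha1 : (a <= 1)%R),
    K (Eadd (Escale ha0 e1) (Escale (onem_nneg ha1) e2)) =
    Eadd (Escale ha0 (K e1)) (Escale (onem_nneg ha1) (K e2)).

Definition linpart D D' (K : EE D -> EE D') : EE D -> EE D' :=
  fun e => Esub (K e) (K (@Ezero D)).

End Ext.

(* Main.v *)
Require Import Defs.
From mathcomp Require Import all_boot all_order all_algebra.
From mathcomp Require Import all_classical reals constructive_ereal.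
From mathcomp Require Import ring lra.
Import Order.TTheory GRing.Theory Num.Theory.
Local Open Scope ring_scope.

Section H.
Variable R : realType.
Local Open Scope ereal_scope.

Lemma nnsubF (s r : R) : (r <= s)%R -> nnsub_val s%:E r%:E = (s - r)%:E.
Proof. move=> h; rewrite /nnsub_val /= max_l // lee_fin subr_ge0 //. Qed.

Lemma nnsubinf (r : R) : nnsub_val +oo r%:E = +oo.
Proof. by rewrite /nnsub_val /= max_l // leey. Qed.

Lemma nnsubc (x : \bar R) : nnsub_val x +oo = 0.
Proof. by rewrite /nnsub_val eqxx. Qed.

Lemma nnsub_neq (x y : \bar R) : nnsub_val x y != -oo.
Proof. by have := nnsub_ge0 x y; case: nnsub_val. Qed.

Lemma mulpy (a : R) : (0 < a)%R -> a%:E * +oo = +oo.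
Proof. by move=> h; rewrite mulry gtr0_sg // mul1e. Qed.

Lemma yaddr (x : \bar R) : x != -oo -> +oo + x = +oo.
Proof. by case: x. Qed.

Lemma L_add (r : R) (x y : \bar R) : r%:E <= x -> r%:E <= y ->
  nnsub_val (2^-1%:E * x + (1 - 2^-1)%:E * y) r%:E =
  nnsub_val (2^-1%:E * x + (1 - 2^-1)%:E * r%:E) r%:E +
  nnsub_val (2^-1%:E * y + (1 - 2^-1)%:E * r%:E) r%:E.
Proof.
have h1 : (0 < 2^-1 :> R)%R by lra.
have h2 : (0 < 1 - 2^-1 :> R)%R by lra.
case: x => [s| |] //; case: y => [t| |] //; rewrite ?lee_fin => hs ht.
- rewrite -!EFinM -!EFinD !nnsubF; [|lra..].
  by rewrite -EFinD; congr EFin; lra.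
- rewrite (mulpy _ h2) -!EFinM -EFinD addey // nnsubinf (mulpy _ h1) yaddr //.
  by rewrite nnsubinf addey ?nnsub_neq.
- by rewrite (mulpy _ h1) -!EFinM yaddr // (nnsubinf r) yaddr ?nnsub_neq.
- have E1 : (2^-1)%:E * +oo = +oo :> \bar R by exact: mulpy.
  have E2 : (1 - 2^-1)%:E * +oo = +oo :> \bar R by exact: mulpy.
  by rewrite E1 E2 -EFinM (nnsubinf r).
Qed.

Lemma L_sc1 (r a : R) (x : \bar R) : (0 <= a)%R -> (a <= 1)%R -> r%:E <= x ->
  nnsub_val (a%:E * x + (1 - a)%:E * r%:E) r%:E = a%:E * nnsub_val x r%:E.
Proof.
move=> ha0 ha1; case: x => [s| |] //; rewrite ?lee_fin => hs.
- rewrite -!EFinM -!EFinD !nnsubF; [|nra..].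
  by rewrite -EFinM; congr EFin; lra.
- rewrite nnsubinf; have [->|hp] := eqVneq a 0%R.
    by rewrite !mul0e subr0 mul1e add0e nnsubF // subrr.
  have ha : (0 < a)%R by rewrite lt0r hp.
  by rewrite (mulpy _ ha) yaddr // nnsubinf.
Qed.

Lemma L_sc2 (r a : R) (y : \bar R) : (1 < a)%R -> r%:E <= y ->
  nnsub_val y r%:E = a%:E * nnsub_val (a^-1%:E * y + (1 - a^-1)%:E * r%:E) r%:E.
Proof.
move=> ha; have ha0 : (0 < a)%R by lra.
have hi0 : (0 < a^-1)%R by rewrite invr_gt0.
have hi1 : (a^-1 < 1)%R by rewrite invf_lt1.
case: y => [s| |] //; rewrite ?lee_fin => hs.
- have e : (a^-1 * s + (1 - a^-1) * r - r = a^-1 * (s - r))%R.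
    by field; rewrite gt_eqF.
  have h3 : (r <= a^-1 * s + (1 - a^-1) * r)%R.
    suff : (0 <= a^-1 * (s - r))%R by rewrite -e subr_ge0.
    apply: mulr_ge0; lra.
  rewrite -!EFinM -!EFinD !nnsubF // e -EFinM; congr EFin.
  by field; rewrite gt_eqF.
- by rewrite nnsubinf (mulpy _ hi0) yaddr // nnsubinf (mulpy _ ha0).
Qed.

Lemma lbound (r s : R) : (0 <= r)%R ->
  (forall a : R, (0 < a)%R -> (a <= 1)%R -> ((1 - a) * r <= s)%R) -> (r <= s)%R.
Proof.
move=> hr h; have s0 : (0 <= s)%R by have := h 1%R ltr01 (lexx _); rewrite subrr mul0r.
rewrite leNgt; apply/negP => hsr.
have rp : (0 < r)%R by lra.
set a := ((r - s) / (r * 2))%R.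
have ha0 : (0 < a)%R by apply: divr_gt0; lra.
have ha1 : (a <= 1)%R by rewrite ler_pdivrMr; lra.
have e : ((1 - a) * r = (r + s) / 2)%R by rewrite /a; field; rewrite gt_eqF.
have := h a ha0 ha1; rewrite e; lra.
Qed.

End H.

Section K.
Variables (R : realType) (D D' : Type) (K : EE R D -> EE R D').
Hypothesis hK : affine K.
Variable d' : D'.
Local Open Scope ereal_scope.

Definition k e := nnval (K e d').
Definition k0 := k (@Ezero R D).

Lemma nn_ext (x y : nninf R) : nnval x = nnval y -> x = y.
Proof. case: x y => x hx [y hy] /= e; exact: eq_exist. Qed.

Lemma EE_ext (D0 : Type) (f g : EE R D0) : (forall d, nnval (f d) = nnval (g d)) -> f = g.
Proof. move=> h; apply: funext => d; exact: nn_ext. Qed.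

Lemma k_aff (a : R) (h0 : (0 <= a)%R) (h1 : (a <= 1)%R) e1 e2 :
  k (Eadd (Escale h0 e1) (Escale (onem_nneg h1) e2)) = a%:E * k e1 + (1-a)%:E * k e2.
Proof. by rewrite /k hK. Qed.

Lemma k_sc (a : R) (h0 : (0 <= a)%R) (h1 : (a <= 1)%R) e :
  k (Escale h0 e) = a%:E * k e + (1-a)%:E * k0.
Proof.
rewrite -k_aff; congr k; apply: EE_ext => d /=.
by rewrite /nnval /= mule0 adde0.
Qed.

Lemma k_inv (a b : R) (h0 : (0 <= a)%R) (h1 : (a <= 1)%R) (hb : (0 <= b)%R) e :
  (a * b = 1)%R -> k e = a%:E * k (Escale hb e) + (1-a)%:E * k0.
Proof.
move=> ab; rewrite -(k_sc _ h0 h1); congr k; apply: EE_ext => d /=.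
by rewrite /nnval /= muleA -EFinM ab mul1e.
Qed.

Lemma k_ge0 e : 0 <= k e.
Proof. exact: (proj2_sig (K e d')). Qed.

Lemma k_lb (r : R) e : k0 = r%:E -> r%:E <= k e.
Proof.
move=> hk0; have r0 : (0 <= r)%R by rewrite -lee_fin -hk0 k_ge0.
case he : (k e) => [s| |] //.
- rewrite lee_fin; apply: lbound => // a ha0 ha1.
  have hb : (0 <= a^-1)%R by rewrite invr_ge0 ltW.
  have := k_inv _ _ (ltW ha0) ha1 hb e; rewrite he hk0 mulfV ?gt_eqF // => /(_ erefl).
  move=> E; rewrite -lee_fin EFinM E; apply: leeDr.
  by apply: mule_ge0; [rewrite lee_fin ltW|apply: k_ge0].
- exact: leey.
- by have := k_ge0 e; rewrite he.
Qed.

End K.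
Arguments k {R D D'} K d' e.
Arguments k0 {R D D'} K d'.
Arguments k_aff {R D D' K} hK {d' a} h0 h1 e1 e2.
Arguments k_sc {R D D' K} hK {d' a} h0 h1 e.
Arguments k_inv {R D D' K} hK {d' a b} h0 h1 hb e.
Arguments k_lb {R D D' K} hK {d' r e}.
Arguments k_ge0 {R D D'} K d' e.
Arguments EE_ext {R D0} f g.

Theorem lemma3p2 (R : realType) (D D' : Type) (K : EE R D -> EE R D') :
  affine K ->
  (forall eta1 eta2 : EE R D,
     linpart K (Eadd eta1 eta2) = Eadd (linpart K eta1) (linpart K eta2)) /\
  (forall (alpha : R) (halpha : 0 <= alpha) (eta : EE R D),
     linpart K (Escale halpha eta) = Escale halpha (linpart K eta)).
Proof.
move=> hK; split.
- move=> e1 e2; apply: EE_ext => d'.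
  change (nnsub_val (k K d' (Eadd e1 e2)) (k0 K d') =
    nnsub_val (k K d' e1) (k0 K d') + nnsub_val (k K d' e2) (k0 K d'))%E.
  case hk0 : (k0 K d') => [r| |].
  + have h2 : (0 <= 2 :> R)%R by [].
    have h0 : (0 <= 2^-1 :> R)%R by rewrite invr_ge0.
    have h1 : (2^-1 <= 1 :> R)%R by rewrite invf_le1 // ler1n.
    have -> : Eadd e1 e2 = Eadd (Escale h0 (Escale h2 e1))
                                (Escale (onem_nneg h1) (Escale h2 e2)).
      apply: EE_ext => d; rewrite /nnval /= !muleA -!EFinM.
      have -> : (2^-1 * 2 = 1 :> R)%R by field.
      have -> : ((1 - 2^-1) * 2 = 1 :> R)%R by field.
      by rewrite !mul1e.
    have hab : (2^-1 * 2 = 1 :> R)%R by field.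
    rewrite (k_aff hK) (k_inv hK h0 h1 h2 e1 hab) (k_inv hK h0 h1 h2 e2 hab).
    rewrite hk0; apply: L_add; exact: (k_lb hK).
  + by rewrite !nnsubc adde0.
  + by have := k_ge0 K d' (@Ezero R D); rewrite -/(k0 K d') hk0.
- move=> a ha e; apply: EE_ext => d'.
  change (nnsub_val (k K d' (Escale ha e)) (k0 K d') =
    a%:E * nnsub_val (k K d' e) (k0 K d'))%E.
  case hk0 : (k0 K d') => [r| |].
  + have [ha1|ha1] := leP a 1%R.
      by rewrite (k_sc hK ha ha1) hk0 L_sc1 // (k_lb hK).
    have hi0 : (0 <= a^-1)%R by rewrite invr_ge0.
    have hi1 : (a^-1 <= 1)%R by rewrite invf_le1 ?ltW //; lra.
    have hab : (a^-1 * a = 1)%R by rewrite mulVf // gt_eqF //; lra.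
    rewrite (k_inv hK hi0 hi1 ha e hab).
    by rewrite hk0 -L_sc2 // (k_lb hK).
  + by rewrite !nnsubc mule0.
  + by have := k_ge0 K d' (@Ezero R D); rewrite -/(k0 K d') hk0.
Qed.
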